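(* Let $Q=(M,\Omega)$ be a $3$-sheltering matroid on ground set $U$. The following are equivalent: (1) $M$ is binary, $r(M)\le|\Omega|$, and every class $\omega\in\Omega$ belongs to the cycle space of $M$; (2) there is a looped simple graph $G$ and a matroid isomorphism $M\to M[IAS(G)]$ that maps the classes of $\Omega$ onto the vertex triples of $G$.
   Context: A sheltering matroid is a pair $Q=(M,\Omega)$ where $M$ is a matroid on a finite set $U$ and $\Omega$ a partition of $U$ such that for every independent set $I$ of $M$ meeting each class in at most one element, and every $2$-element subset $\{x,y\}$ of a class $\omega$ with $\omega\cap I=\emptyset$, $I\cup\{x\}$ or $I\cup\{y\}$ is independent in $M$. It is a $3$-sheltering matroid if all classes of $\Omega$ have size $3$. The cycle space of a binary matroid $M$ on $U$ is the set of subsets of $U$ that are disjoint unions (equivalently symmetric differences) of circuits; for a binary representation, these are the sets of columns summing to $0$. A looped simple graph is a finite graph in which each vertex carries at most one loop and no two distinct vertices are joined by more than one edge. $A(G)$ is the $V(G)\times V(G)$ matrix over $GF(2)$ with diagonal entry $1$ exactly at looped vertices and off-diagonal entry $1$ exactly for adjacent distinct vertices. $IAS(G)=(I\mid A(G)\mid A(G)+I)$ over $GF(2)$, rows indexed by $V(G)$; the $v$-columns of the three blocks are labelled $\phi_G(v),\chi_G(v),\psi_G(v)$. $M[IAS(G)]$ is the binary column matroid of $IAS(G)$ on $W(G)=\{\phi_G(v),\chi_G(v),\psi_G(v):v\in V(G)\}$, and the vertex triple of $v$ is $\{\phi_G(v),\chi_G(v),\psi_G(v)\}$. *)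

(* Defs.v *)
From HB Require Import structures.
From mathcomp Require Import all_boot all_order all_algebra.
Set Implicit Arguments. Unset Strict Implicit. Unset Printing Implicit Defensive.
Import GRing.Theory.
Local Open Scope ring_scope.

Record matroid (U : finType) := Matroid {
  indep : {set U} -> bool;
  indep0 : indep set0;
  indep_sub : forall A B : {set U}, B \subset A -> indep A -> indep B;
  indep_aug : forall A B : {set U}, indep A -> indep B -> (#|A| < #|B|)%N ->
                exists2 x, x \in B :\: A & indep (x |: A)
}.

Definition mrank (U : finType) (M : matroid U) : nat :=
  \max_(I : {set U} | indep M I) #|I|.

Definition circuit (U : finType) (M : matroid U) (C : {set U}) : Prop :=
  ~~ indep M C /\ (forall D : {set U}, D \proper C -> indep M D).

Definition in_cycle_space (U : finType) (M : matroid U) (C : {set U}) : Prop :=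
  exists P : {set {set U}},
    [/\ forall c, c \in P -> circuit M c, trivIset P & cover P = C].

Definition binary (U : finType) (M : matroid U) : Prop :=
  exists (n : nat) (col : U -> 'rV['F_2]_n),
    forall I : {set U}, indep M I = free [seq col x | x in I].

Definition sheltering (U : finType) (M : matroid U) (Omega : {set {set U}}) : Prop :=
  partition Omega [set: U] /\
  forall I : {set U}, indep M I ->
    (forall w, w \in Omega -> (#|w :&: I| <= 1)%N) ->
    forall w, w \in Omega -> w :&: I = set0 ->
    forall x y, x \in w -> y \in w -> x != y ->
      indep M (x |: I) || indep M (y |: I).

Definition three_sheltering (U : finType) (M : matroid U) (Omega : {set {set U}}) : Prop :=
  sheltering M Omega /\ forall w, w \in Omega -> #|w| = 3%N.

(* A looped simple graph on vertex type V is a symmetric relation e on V;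
   e v v means v is looped, e v w (v != w) means v, w adjacent. *)
Definition adjmx (V : finType) (e : rel V) : 'M['F_2]_#|V| :=
  \matrix_(i, j) (e (enum_val i) (enum_val j))%:R.

(* W(G) = V * 'I_3, where (v,0) = phi_G(v), (v,1) = chi_G(v), (v,2) = psi_G(v).
   The column of IAS(G) labelled by an element of W(G) (as a row vector). *)
Definition ias_col (V : finType) (e : rel V) (a : V * 'I_3) : 'rV['F_2]_#|V| :=
  let phi := (col (enum_rank a.1) (1%:M : 'M['F_2]_#|V|))^T in
  let chi := (col (enum_rank a.1) (adjmx e))^T in
  match nat_of_ord a.2 with
  | 0%N => phi
  | 1%N => chi
  | _ => chi + phi
  end.

Definition ias_indep (V : finType) (e : rel V) (I : {set V * 'I_3}) : bool :=
  free [seq ias_col e a | a in I].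

Definition vertex_triple (V : finType) (v : V) : {set V * 'I_3} :=
  [set a | a.1 == v].

(* Main.v *)
Require Import Defs.
From mathcomp Require Import all_boot all_order all_algebra.
From mathcomp Require Import zify.
From Stdlib Require Import Classical.
Set Implicit Arguments. Unset Strict Implicit. Unset Printing Implicit Defensive.

Module Aux.
Import GRing.Theory.
Local Open Scope ring_scope.

Definition li (K : fieldType) (vT : lmodType K) (T : finType) (g : T -> vT) (I : {set T}) : Prop :=
  forall k : T -> K, \sum_(x in I) k x *: g x = 0 -> forall x, x \in I -> k x = 0.

Lemma freeE_li (K : fieldType) (vT : vectType K) (T : finType) (g : T -> vT) (I : {set T}) :
  free [seq g x | x in I] <-> li g I.
Proof.
rewrite /image_mem.
set s := enum I.
have us : uniq s by exact: enum_uniq.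
have ms : forall x, (x \in s) = (x \in I) by move=> x; rewrite mem_enum.
have Hsum : forall k : T -> K, \sum_(x in I) k x *: g x = \sum_(x <- s) k x *: g x.
  by move=> k; rewrite big_enum.
have Hs : size (map g s) = size s by rewrite size_map.
split.
- move=> /(freeP (X := in_tuple [seq g x | x <- s])) /= Hf k Hk x xI.
  pose k' := fun i : 'I_(size (map g s)) => k (nth x s i).
  have := Hf k'.
  have xs : x \in s by rewrite ms.
  have ix : (index x s < size (map g s))%N by rewrite Hs index_mem.
  move=> /(_ _ (Ordinal ix)) /=; rewrite /k' nth_index //; apply.
  rewrite Hsum (big_nth x) in Hk.
  rewrite -[RHS]Hk -(big_mkord xpredT (fun i => k (nth x s i) *: (map g s)`_i)) Hs.
  by apply: eq_big_nat => i /andP[_ lti]; rewrite (nth_map x).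
- move=> Hli; apply/(freeP (X := in_tuple [seq g x | x <- s])) => /= k Hk i.
  have lti : (i < size s)%N by rewrite -Hs.
  have [x0 _] : exists x0 : T, true.
    have : (0 < size (enum I))%N by apply: leq_ltn_trans lti.
    by case: (enum I) => [|y ?] //; exists y.
  pose kk := fun y : T => match insub (index y s) with Some j => k j | None => 0 end.
  have Hkk : forall j : 'I_(size (map g s)), kk (nth x0 s j) = k j.
    move=> j; rewrite /kk.
    have jl : (j < size s)%N by rewrite -Hs.
    rewrite index_uniq // insubT //= => H; congr (k _); exact: val_inj.
  rewrite -Hkk; apply: Hli; last by rewrite -ms mem_nth // -Hs.
  rewrite Hsum (big_nth x0) -[RHS]Hk.
  have -> : \sum_(i < size (map g s)) k i *: (map g s)`_i =
     \sum_(i < size (map g s)) kk (nth x0 s i) *: g (nth x0 s i).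
    by apply: eq_bigr => j _; rewrite Hkk (nth_map x0) // -Hs.
  by rewrite (big_mkord xpredT (fun i => kk (nth x0 s i) *: g (nth x0 s i))) Hs.
Qed.

Section LiGen.
Variables (K : fieldType) (vT : lmodType K) (T : finType).
Implicit Types (g : T -> vT) (I J : {set T}).

Lemma li_ext g I x : li g I -> x \notin I -> ~ li g (x |: I) ->
  exists k : T -> K, g x = \sum_(y in I) k y *: g y.
Proof.
move=> HI xI Hn.
have [k [Hk [y yI ky]]] : exists k : T -> K, \sum_(y in x |: I) k y *: g y = 0 /\
    exists2 y, y \in x |: I & k y <> 0.
  apply: NNPP => Hc; apply: Hn => k Hk y yI; apply: NNPP => ky.
  by apply: Hc; exists k; split => //; exists y.
rewrite big_setU1 //= in Hk.
have kx : k x != 0.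
  apply/negP => /eqP kx0; rewrite kx0 scale0r add0r in Hk.
  move: yI; rewrite in_setU1 => /orP[/eqP yx|yI]; first by apply: ky; rewrite yx.
  by apply: ky; apply: HI.
exists (fun y => - (k x)^-1 * k y).
have : g x = - (k x)^-1 *: \sum_(y in I) k y *: g y.
  apply: (@scalerI _ _ (k x)) => //.
  rewrite scalerA mulrN mulfV // scaleN1r.
  by apply/eqP; rewrite -subr_eq0 opprK; apply/eqP.
move=> ->; rewrite scaler_sumr; apply: eq_bigr => z _; by rewrite scalerA.
Qed.

Lemma li_sum_dep g C : C != set0 -> \sum_(x in C) g x = 0 -> ~ li g C.
Proof.
move=> /set0Pn [x xC] Hs Hli.
have H1 : \sum_(y in C) (fun _ => 1 : K) y *: g y = 0.
  by rewrite -[RHS]Hs; apply: eq_bigr => y _; rewrite scale1r.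
by have /eqP := Hli _ H1 x xC; rewrite oner_eq0.
Qed.

Lemma li_transfer (V : finType) (b : V -> vT)
  (hb : forall c : V -> K, \sum_u c u *: b u = 0 -> forall u, c u = 0)
  (kap : T -> 'rV[K]_#|V|) (g : T -> vT)
  (hg : forall x, g x = \sum_u kap x 0 (enum_rank u) *: b u) J :
  li g J <-> li kap J.
Proof.
have E : forall k : T -> K, \sum_(x in J) k x *: g x =
    \sum_u (\sum_(x in J) k x *: kap x) 0 (enum_rank u) *: b u.
  move=> k.
  under eq_bigr do rewrite hg scaler_sumr.
  rewrite exchange_big /=; apply: eq_bigr => u _.
  rewrite summxE scaler_suml; apply: eq_bigr => x _.
  by rewrite mxE scalerA.
split => H k Hk.
- apply: H; rewrite E; apply: big1 => u _.
  by rewrite Hk mxE scale0r.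
- apply: H; apply/rowP => j; rewrite mxE.
  have := hb _ (etrans (esym (E k)) Hk) (enum_val j).
  by rewrite enum_valK.
Qed.

End LiGen.

Lemma li_setT_row (K : fieldType) (T : finType) n (g : T -> 'rV[K]_n) I x (j : 'I_n) :
  li g I -> x \notin I -> (forall y, y \in I -> g y 0 j = 0) -> g x 0 j != 0 ->
  li g (x |: I).
Proof.
move=> HI xI Hy Hx; apply: NNPP => Hn.
have [k Hk] := li_ext HI xI Hn.
move: Hx; rewrite Hk summxE big1 ?eqxx // => y yI.
by rewrite mxE Hy // mulr0.
Qed.


Lemma li_imset (K : fieldType) (vT : lmodType K) (T T' : finType) (f : T -> T')
  (h : T' -> vT) (I : {set T}) : injective f ->
  li h (f @: I) <-> li (fun x => h (f x)) I.
Proof.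
move=> finj; split => H k Hk.
- move=> x xI.
  pose k' := fun y : T' => if [pick x | f x == y] is Some x then k x else 0.
  have k'f : forall x, k' (f x) = k x.
    move=> z; rewrite /k'; case: pickP => [z' /eqP /finj -> //|/(_ z)].
    by rewrite eqxx.
  rewrite -k'f; apply: H; last by apply: imset_f.
  rewrite big_imset /=; last by move=> ? ? _ _; apply: finj.
  by rewrite -[RHS]Hk; apply: eq_bigr => z _; rewrite k'f.
- move=> y /imsetP [x xI ->].
  apply: (H (fun x => k (f x))) => //.
  by rewrite -[RHS]Hk big_imset //= => ? ? _ _; apply: finj.
Qed.

Lemma F2cases (c : 'F_2) : c = 0 \/ c = 1.
Proof. by case: c => [[|[|]]] // ?; [left|right]; apply: val_inj. Qed.

Lemma F2_add2 (vT : lmodType 'F_2) (v : vT) : v + v = 0.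
Proof.
have -> : v + v = (1 + 1 : 'F_2) *: v by rewrite scalerDl scale1r.
have -> : (1 + 1 : 'F_2) = 0 by apply: val_inj.
by rewrite scale0r.
Qed.

Lemma F2_opp (vT : lmodType 'F_2) (v : vT) : - v = v.
Proof. by apply/eqP; rewrite eq_sym -addr_eq0 F2_add2. Qed.

Lemma li_single (vT : lmodType 'F_2) (T : finType) (g : T -> vT) x :
  g x != 0 -> li g [set x].
Proof.
move=> gx k; rewrite big_set1 => /eqP; rewrite scaler_eq0 (negPf gx) orbF => /eqP kx y.
by rewrite in_set1 => /eqP ->.
Qed.

Lemma li_pair (vT : lmodType 'F_2) (T : finType) (g : T -> vT) x y :
  x != y -> g x != 0 -> g y != 0 -> g x != g y -> li g [set x; y].
Proof.
move=> xy gx gy gxy k; rewrite big_setU1 ?inE // big_set1 => Hk0 z.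
have Hk : k x *: g x + k y *: g y = 0 by exact: Hk0.
rewrite !inE => Hz.
have [kx|kx] := F2cases (k x); have [ky|ky] := F2cases (k y);
  rewrite ?kx ?ky ?scale0r ?scale1r ?add0r ?addr0 in Hk.
- by case/orP: Hz => /eqP ->.
- by rewrite Hk eqxx in gy.
- by rewrite Hk eqxx in gx.
- by move: gxy; rewrite -subr_eq0 F2_opp Hk eqxx.
Qed.

Lemma circuitI (U : finType) (M : matroid U) C : ~~ indep M C ->
  (forall x, x \in C -> indep M (C :\ x)) -> circuit M C.
Proof.
move=> HC Hx; split => // D /properP [DC [x xC xD]].
apply: (indep_sub _ (Hx x xC)).
apply/subsetP => y yD; rewrite !inE (subsetP DC) // andbT.
by apply/eqP => yx; rewrite -yx yD in xD.
Qed.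

Lemma indep_le_mrank (U : finType) (M : matroid U) I : indep M I -> (#|I| <= mrank M)%N.
Proof. by move=> HI; rewrite /mrank (leq_bigmax_cond (F := fun I : {set U} => #|I|) _ HI). Qed.

Lemma li_eq (K : fieldType) (vT : lmodType K) (T : finType) (g1 g2 : T -> vT) J :
  (forall x, g1 x = g2 x) -> li g1 J <-> li g2 J.
Proof.
move=> E; split => H k Hk; apply: H; rewrite -[RHS]Hk; apply: eq_bigr => x _; by rewrite E.
Qed.

Lemma F2_eq1 (c : 'F_2) : ((c == 1)%:R : 'F_2) = c.
Proof. by have [->|->] := F2cases c. Qed.

Lemma triv2 (T : finType) (A B : {set T}) : A != B -> [disjoint A & B] -> B != set0 ->
  trivIset [set A; B] /\ cover [set A; B] = A :|: B.
Proof.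
move=> AB dAB B0; split.
  have [] := @trivIsetU1 _ A [set B] _ (trivIset1 B) _ => //.
    by move=> C; rewrite inE => /eqP ->.
  by rewrite inE eq_sym.
by rewrite /cover big_setU1 ?inE // big_set1.
Qed.

Lemma ias_col0 (V : finType) (e : rel V) v (j : 'I_#|V|) :
  ias_col e (v, @Ordinal 3 0 isT) 0 j = (j == enum_rank v)%:R.
Proof. by rewrite /ias_col /= !mxE. Qed.

Lemma ias_col1 (V : finType) (e : rel V) v (j : 'I_#|V|) :
  ias_col e (v, @Ordinal 3 1 isT) 0 j = (e (enum_val j) v)%:R.
Proof. by rewrite /ias_col /= !mxE enum_rankK. Qed.

Lemma ias_col2 (V : finType) (e : rel V) v :
  ias_col e (v, @Ordinal 3 2 isT) = ias_col e (v, @Ordinal 3 1 isT) + ias_col e (v, @Ordinal 3 0 isT).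
Proof. by []. Qed.

Section Dir21.
Variables (U : finType) (M : matroid U) (Omega : {set {set U}}).
Variables (V : finType) (e : rel V) (f : U -> V * 'I_3).
Hypothesis fbij : bijective f.
Hypothesis Hind : forall I : {set U}, indep M I = ias_indep e (f @: I).
Hypothesis Hom : [set f @: w | w : {set U} in Omega] = [set vertex_triple v | v : V].

Let g x := ias_col e (f x).

Lemma finj : injective f. Proof. exact: bij_inj. Qed.

Lemma HI I : indep M I <-> li g I.
Proof.
rewrite Hind /ias_indep freeE_li; exact: li_imset finj.
Qed.

Lemma d21_binary : binary M.
Proof.
exists #|V|, g => I; apply/idP/idP => H.
- by apply/freeE_li; apply/HI.
- by apply/HI; apply/freeE_li.
Qed.

Lemma d21_rank : (mrank M <= #|Omega|)%N.
Proof.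
have -> : #|Omega| = #|V|.
  rewrite -(card_in_imset (f := fun w : {set U} => f @: w) (D := mem Omega)); last first.
    by move=> A B _ _; apply: (imset_inj finj).
  rewrite Hom card_imset // => v1 v2 E.
  have : (v1, @Ordinal 3 0 isT) \in vertex_triple v2 by rewrite -E inE.
  by rewrite inE => /eqP.
rewrite /mrank; apply/bigmax_leqP => I HIi.
have Hf : free [seq g x | x in I] by apply/freeE_li; apply/HI.
have := dimvS (subvf <<[seq g x | x in I]>>%VS).
rewrite (eqP Hf) size_map -cardE dimvf /dim /= mul1n.
by [].
Qed.


Lemma d21_cycle w : w \in Omega -> in_cycle_space M w.
Proof.
move=> wO.
have : f @: w \in [set vertex_triple v | v : V] by rewrite -Hom; apply: imset_f.
case/imsetP => v _ Hw.
have [fi fK fiK] := fbij.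
pose i0 := @Ordinal 3 0 isT; pose i1 := @Ordinal 3 1 isT; pose i2 := @Ordinal 3 2 isT.
pose a0 := fi (v, i0); pose a1 := fi (v, i1); pose a2 := fi (v, i2).
have fa : forall i, f (fi (v, i)) = (v, i) by move=> i; rewrite fiK.
have ain : forall i, fi (v, i) \in w.
  by move=> i; rewrite -(mem_imset _ _ finj) fa Hw inE.
have wE : w = [set a0; a1; a2].
  apply/setP => x; apply/idP/idP => [xw|]; last by rewrite !inE => /orP [/orP []|] /eqP ->; apply: ain.
  have : f x \in vertex_triple v by rewrite -Hw; apply: imset_f.
  rewrite inE => /eqP E.
  have -> : x = fi (v, (f x).2) by rewrite -E -surjective_pairing fK.
  by case: (f x).2 => [[|[|[|]]]] // p; rewrite !inE;
    [ rewrite (_ : Ordinal p = i0) ?eqxx //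
    | rewrite (_ : Ordinal p = i1) ?eqxx ?orbT //
    | rewrite (_ : Ordinal p = i2) ?eqxx ?orbT // ]; apply: val_inj.
have ga : forall i, g (fi (v, i)) = ias_col e (v, i) by move=> i; rewrite /g fa.
have dist : forall i j, i != j -> fi (v, i) != fi (v, j).
  by move=> i j ij; apply: contra ij => /eqP /(can_inj fiK) [->].
have a01 : a0 != a1 by apply: dist.
have a02 : a0 != a2 by apply: dist.
have a12 : a1 != a2 by apply: dist.
set phi := ias_col e (v, i0); set chi := ias_col e (v, i1).
have g0 : g a0 = phi by rewrite ga.
have g1 : g a1 = chi by rewrite ga.
have g2 : g a2 = chi + phi by rewrite ga.
have phi0 : phi != 0.
  apply/eqP => /rowP /(_ (enum_rank v)); rewrite ias_col0 !mxE eqxx.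
  by move/eqP; rewrite oner_eq0.
have dep : forall C, C != set0 -> \sum_(x in C) g x = 0 -> ~~ indep M C.
  by move=> C C0 Hs; apply/negP => /HI; apply: li_sum_dep.
have ind1 : forall x, g x != 0 -> indep M [set x].
  by move=> x gx; apply/HI; apply: li_single.
have ind2 : forall x y, x != y -> g x != 0 -> g y != 0 -> g x != g y -> indep M [set x; y].
  by move=> x y *; apply/HI; apply: li_pair.
have ne0 : forall x : U, [set x] != set0 by move=> x; apply/set0Pn; exists x; rewrite inE.
have ne2 : forall x y : U, [set x; y] != set0 by move=> x y; apply/set0Pn; exists x; rewrite !inE eqxx.
have D1 : forall x : U, [set x] :\ x = set0.
  by move=> x; apply/setP => y; rewrite !inE; case: eqP.
have D2l : forall x y : U, x != y -> [set x; y] :\ x = [set y].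
  move=> x y xy; apply/setP => z; rewrite !inE.
  by case: (eqVneq z x) => [->|zx] /=; [rewrite (negPf xy) | ].
have D2r : forall x y : U, x != y -> [set x; y] :\ y = [set x].
  move=> x y xy; apply/setP => z; rewrite !inE.
  by case: (eqVneq z y) => [->|] /=; [rewrite eq_sym (negPf xy) | rewrite orbF].
have sum2 : forall x y : U, x != y -> \sum_(z in [set x; y]) g z = g x + g y.
  by move=> x y xy; rewrite big_setU1 ?inE // big_set1.
have circ1 : forall x, g x = 0 -> circuit M [set x].
  move=> x gx; apply: circuitI; first by apply: dep; rewrite ?big_set1.
  by move=> y; rewrite inE => /eqP ->; rewrite D1 indep0.
have circ2 : forall x y, x != y -> g x = g y -> g x != 0 -> circuit M [set x; y].
  move=> x y xy gxy gx; apply: circuitI.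
    by apply: dep => //; rewrite sum2 // gxy F2_add2.
  move=> z; rewrite !inE => /orP [] /eqP ->; [rewrite D2l // | rewrite D2r //];
    apply: ind1; rewrite -?gxy //.
have disj : forall x y z : U, x != y -> x != z -> [disjoint [set x] & [set y; z]].
  move=> x y z xy xz; rewrite disjoint_sym disjoints_subset; apply/subsetP => u.
  by rewrite !inE => /orP [] /eqP ->; rewrite eq_sym ?xy ?xz.
have neq12 : forall x y z : U, x != y -> [set x] != [set y; z].
  move=> x y z xy; apply/eqP => /setP /(_ y); rewrite !inE eqxx /=.
  by rewrite eq_sym (negPf xy).
case: (eqVneq chi 0) => [chi0|chi0].
  exists [set [set a1]; [set a0; a2]].
  have a10 : a1 != a0 by rewrite eq_sym.
  have [tr cv] := triv2 (neq12 _ _ a2 a10) (disj _ _ _ a10 a12) (ne2 _ _).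
  split => //; last by rewrite cv wE; apply/setP => x; rewrite !inE;
    case: (x == a0); case: (x == a1); case: (x == a2).
  move=> c; rewrite !inE => /orP [] /eqP ->.
    by apply: circ1; rewrite g1.
  by apply: circ2 => //; rewrite g0 // g2 chi0 add0r.
case: (eqVneq chi phi) => [chiphi|chiphi].
  exists [set [set a2]; [set a0; a1]].
  have a20 : a2 != a0 by rewrite eq_sym.
  have a21 : a2 != a1 by rewrite eq_sym.
  have [tr cv] := triv2 (neq12 _ _ a1 a20) (disj _ _ _ a20 a21) (ne2 _ _).
  split => //; last by rewrite cv wE; apply/setP => x; rewrite !inE;
    case: (x == a0); case: (x == a1); case: (x == a2).
  move=> c; rewrite !inE => /orP [] /eqP ->.
    by apply: circ1; rewrite g2 chiphi F2_add2.
  by apply: circ2 => //; rewrite ?g0 ?g1 ?chiphi.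
exists [set w]; split; [|exact: trivIset1|exact: cover1].
move=> c; rewrite inE => /eqP ->.
have w3 : forall x, x \in w = [|| x == a0, x == a1 | x == a2].
  by move=> x; rewrite wE !inE orbA.
apply: circuitI.
  apply: dep; first by apply/set0Pn; exists a0; rewrite w3 eqxx.
  have -> : w = a0 |: [set a1; a2] by rewrite wE; apply/setP => x; rewrite !inE orbA.
  rewrite big_setU1 /=; last by rewrite !inE negb_or a01 a02.
  rewrite sum2 // g0 g1 g2.
  by rewrite [chi + phi]addrC addrA F2_add2.
have gne : forall x y : U, x != y -> g x != g y -> [set x; y] = [set y; x].
  by move=> x y _ _; apply/setP => z; rewrite !inE orbC.
have h1 : chi + phi != 0 by rewrite addr_eq0 F2_opp.
have h2 : chi != chi + phi by apply: contra phi0 => /eqP E; rewrite -(addKr chi phi) -E addNr.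
have h3 : phi != chi + phi by apply: contra chi0 => /eqP E; rewrite -(addrK phi chi) -E subrr.
have h2' := h2; rewrite eq_sym in h2'.
have h3' := h3; rewrite eq_sym in h3'.
have h4 := chiphi; rewrite eq_sym in h4.
move=> x; rewrite w3 => /or3P [] /eqP ->.
- have -> : w :\ a0 = [set a1; a2].
    apply/setP => z; rewrite !inE w3.
    by case: (eqVneq z a0) => [->|]; rewrite ?(negPf a01) ?(negPf a02).
  by apply: ind2 => //; rewrite ?g1 ?g2.
- have -> : w :\ a1 = [set a0; a2].
    apply/setP => z; rewrite !inE w3.
    case: (eqVneq z a1) => [->|_] /=; last by [].
    by rewrite eq_sym (negPf a01) (negPf a12).
  by apply: ind2 => //; rewrite ?g0 ?g2.
- have -> : w :\ a2 = [set a0; a1].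
    apply/setP => z; rewrite !inE w3.
    case: (eqVneq z a2) => [->|_] /=; rewrite ?orbF //.
    by rewrite eq_sym (negPf a02) eq_sym (negPf a12).
  by apply: ind2 => //; rewrite ?g0 ?g1.
Qed.
End Dir21.

Lemma circuit_sum (U : finType) (M : matroid U) (vT : lmodType 'F_2) (g : U -> vT)
  (HI : forall J, indep M J <-> li g J) C : circuit M C -> \sum_(x in C) g x = 0.
Proof.
move=> [HC Hp].
have [k [Hk [x0 x0C kx0]]] : exists k : U -> 'F_2, \sum_(y in C) k y *: g y = 0 /\
    exists2 y, y \in C & k y <> 0.
  apply: NNPP => Hc; move/negP: HC; apply; apply/HI => k Hk y yI; apply: NNPP => ky.
  by apply: Hc; exists k; split => //; exists y.
set S := [set x in C | k x != 0].
have ES : \sum_(x in S) g x = 0.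
  rewrite -[RHS]Hk [in RHS](big_setID S) /=.
  have -> : C :&: S = S by apply/setIidPr; apply/subsetP => x; rewrite inE => /andP[].
  rewrite [X in _ = _ + X]big1 ?addr0; last first.
    move=> x; rewrite !inE negb_and negbK => /andP [/orP [] H xC].
      by rewrite xC in H.
    by rewrite (eqP H) scale0r.
  apply: eq_bigr => x; rewrite inE => /andP [_ kx].
  by have [k0|->] := F2cases (k x); [rewrite k0 eqxx in kx | rewrite scale1r].
have SC : S \subset C by apply/subsetP => x; rewrite inE => /andP [].
case: (eqVneq S C) => [<- //|SnC].
have : S \proper C by rewrite properEneq SnC.
move/Hp/HI => liS.
exfalso; apply: (li_sum_dep (g := g) _ ES liS).
by apply/set0Pn; exists x0; rewrite inE x0C; apply/eqP.
Qed.

Lemma cycle_sum (U : finType) (M : matroid U) (vT : lmodType 'F_2) (g : U -> vT)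
  (HI : forall J, indep M J <-> li g J) w : in_cycle_space M w -> \sum_(x in w) g x = 0.
Proof.
move=> [P [HP tP <-]].
rewrite big_trivIset //; apply: big1 => C CP; exact: circuit_sum (HP C CP).
Qed.

Section Dir12.
Variables (U : finType) (M : matroid U) (Omega : {set {set U}}).
Hypothesis hS : three_sheltering M Omega.
Variables (n : nat) (col : U -> 'rV['F_2]_n).
Hypothesis Hcol : forall I : {set U}, indep M I = free [seq col x | x in I].
Hypothesis Hrk : (mrank M <= #|Omega|)%N.
Hypothesis Hcyc : forall w, w \in Omega -> in_cycle_space M w.

Lemma Hli J : indep M J <-> li col J.
Proof. by rewrite Hcol freeE_li. Qed.

Definition pb x := pblock Omega x.

Lemma partO : partition Omega [set: U]. Proof. by case: hS => [[]]. Qed.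
Lemma trivO : trivIset Omega. Proof. by case/and3P: partO. Qed.
Lemma coverO : cover Omega = [set: U]. Proof. by case/and3P: partO => /eqP. Qed.
Lemma pb_in x : pb x \in Omega. Proof. by apply: pblock_mem; rewrite coverO. Qed.
Lemma mem_pb x : x \in pb x. Proof. by rewrite /pb mem_pblock coverO. Qed.
Lemma pb_eq w x : w \in Omega -> x \in w -> pb x = w.
Proof. by move=> wO xw; apply: def_pblock => //; exact: trivO. Qed.
Lemma pb_same x y : y \in pb x -> pb y = pb x.
Proof. by move=> yx; apply: pb_eq => //; exact: pb_in. Qed.
Lemma card3 w : w \in Omega -> #|w| = 3%N. Proof. by case: hS => _; apply. Qed.
Lemma shel : forall I : {set U}, indep M I ->
    (forall w, w \in Omega -> (#|w :&: I| <= 1)%N) ->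
    forall w, w \in Omega -> w :&: I = set0 ->
    forall x y, x \in w -> y \in w -> x != y ->
      indep M (x |: I) || indep M (y |: I).
Proof. by case: hS => [[]]. Qed.

Definition pt (I : {set U}) := indep M I && [forall w in Omega, #|w :&: I| <= 1]%N.

Lemma exists_maxpt : exists I, pt I /\ forall J, pt J -> (#|J| <= #|I|)%N.
Proof.
have pt0 : pt set0.
  rewrite /pt indep0; apply/forall_inP => w _; by rewrite setI0 cards0.
case: (@arg_maxnP _ set0 pt (fun I => #|I|) pt0) => I ptI maxI.
by exists I.
Qed.

Variable I : {set U}.
Hypothesis ptI : pt I.
Hypothesis maxI : forall J, pt J -> (#|J| <= #|I|)%N.

Lemma indI : indep M I. Proof. by case/andP: ptI. Qed.
Lemma le1I w : w \in Omega -> (#|w :&: I| <= 1)%N.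
Proof. by case/andP: ptI => _ /forall_inP; apply. Qed.

Lemma uniqI w y1 y2 : w \in Omega -> y1 \in w -> y2 \in w -> y1 \in I -> y2 \in I -> y1 = y2.
Proof.
move=> wO y1w y2w y1I y2I; have /card_le1_eqP := le1I wO; apply; by rewrite inE ?y1w ?y2w.
Qed.

Lemma meetI w : w \in Omega -> exists y, y \in w :&: I.
Proof.
move=> wO; apply: NNPP => Hn.
have w0 : w :&: I = set0.
  by apply/setP => y; rewrite in_set0; apply/negP => H; apply: Hn; exists y.
have : (1 < #|w|)%N by rewrite card3.
case/card_gt1P => x [y [xw yw xy]].
have key : forall z, z \in w -> indep M (z |: I) -> False.
  move=> z zw Hz.
  have zI : z \notin I.
    by apply/negP => zI; move/setP: w0 => /(_ z); rewrite inE zw zI in_set0.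
  have : pt (z |: I).
    rewrite /pt Hz; apply/forall_inP => w' w'O; apply/card_le1_eqP.
    move=> a b; rewrite !inE => /andP [aw' aI] /andP [bw' bI].
    have wz : forall c, c \in w' -> c == z \/ c \in I -> c \in I \/ (c = z /\ w' = w).
      move=> c cw' [/eqP cz|cI]; last by left.
      right; split => //; rewrite cz in cw'.
      by rewrite -(pb_eq w'O cw') (pb_eq wO zw).
    have nI : forall c, c \in w -> c \in I -> False.
      by move=> c cw cI; move/setP: w0 => /(_ c); rewrite inE cw cI in_set0.
    case: (wz a aw' (orP aI)) => [aI'|[az ew]]; case: (wz b bw' (orP bI)) => [bI'|[bz ew']].
    - by apply: esym; exact: uniqI w'O aw' bw' aI' bI'.
    - by exfalso; apply: (nI a) => //; rewrite -ew'.
    - by exfalso; apply: (nI b) => //; rewrite -ew.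
    - by rewrite az bz.
  move/maxI; rewrite cardsU1 zI add1n ltnn //.
by have /orP [] := shel indI le1I wO w0 xw yw xy; [apply: key | apply: key].
Qed.

Lemma sizeI : (#|Omega| <= #|I|)%N.
Proof.
apply: leq_trans (leq_imset_card pb I).
apply: subset_leq_card; apply/subsetP => w wO.
have [y] := meetI wO; rewrite inE => /andP [yw yI].
by apply/imsetP; exists y => //; rewrite (pb_eq wO yw).
Qed.

Lemma rkI J : indep M J -> (#|J| <= #|I|)%N.
Proof.
move=> HJ; apply: leq_trans (indep_le_mrank HJ) _; exact: leq_trans Hrk sizeI.
Qed.

Lemma liI : li col I. Proof. by apply/Hli; exact: indI. Qed.

Lemma spanI x : x \notin I -> exists k : U -> 'F_2, col x = \sum_(y in I) k y *: col y.
Proof.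
move=> xI; apply: (li_ext liI xI) => /Hli H.
by have := rkI H; rewrite cardsU1 xI add1n ltnn.
Qed.

Definition V : finType := {x : U | x \in I}.
Definition b (u : V) := col (val u).
Definition kof (c : V -> 'F_2) (y : U) : 'F_2 := if insub y is Some u then c u else 0.

Lemma kofE c (u : V) : kof c (val u) = c u.
Proof. by rewrite /kof valK. Qed.

Lemma sumV (c : V -> 'F_2) : \sum_u c u *: b u = \sum_(y in I) kof c y *: col y.
Proof. by rewrite (big_sub I); apply: eq_bigr => u _; rewrite kofE. Qed.

Lemma hb (c : V -> 'F_2) : \sum_u c u *: b u = 0 -> forall u, c u = 0.
Proof.
by rewrite sumV => H u; rewrite -kofE; apply: liI H _ (valP u).
Qed.

Lemma hbU (c d : V -> 'F_2) : \sum_u c u *: b u = \sum_u d u *: b u -> forall u, c u = d u.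
Proof.
move=> E u; apply/eqP; rewrite -subr_eq0; apply/eqP.
apply: (hb (c := fun u => c u - d u)).
under eq_bigr do rewrite scalerBl.
by rewrite sumrB E subrr.
Qed.

Lemma coord_ex x : exists c : {ffun V -> 'F_2}, col x = \sum_u c u *: b u.
Proof.
case: (boolP (x \in I)) => xI.
  exists [ffun u => ((val u == x)%:R : 'F_2)].
  rewrite (bigD1 (Sub x xI : V)) //= ffunE eqxx scale1r big1 ?addr0 //.
  move=> u ux; rewrite ffunE; case: eqP => [E|_]; last by rewrite scale0r.
  by move/eqP: ux; case; apply: val_inj.
have [k Hk] := spanI xI.
exists [ffun u : V => k (val u)].
by rewrite Hk (big_sub I); apply: eq_bigr => u _; rewrite ffunE.
Qed.

Definition cf x : {ffun V -> 'F_2} :=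
  odflt [ffun _ => 0] [pick c : {ffun V -> 'F_2} | col x == \sum_u c u *: b u].

Lemma cfP x : col x = \sum_u cf x u *: b u.
Proof.
rewrite /cf; case: pickP => [c /eqP //|H].
by have [c Hc] := coord_ex x; move: (H c); rewrite Hc eqxx.
Qed.

Lemma cf_val (v : V) u : cf (val v) u = (u == v)%:R.
Proof.
apply: (hbU (c := cf (val v)) (d := fun u => (u == v)%:R)) => //.
rewrite -cfP (bigD1 v) //= eqxx scale1r big1 ?addr0 // => u' /negPf ->.
by rewrite scale0r.
Qed.


Lemma meet_pb x : exists y, y \in pb x :&: I. Proof. exact: meetI (pb_in x). Qed.
Definition tof x : U := xchoose (meet_pb x).
Lemma tofP x : tof x \in pb x :&: I. Proof. exact: (xchooseP (meet_pb x)). Qed.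
Lemma tofI x : tof x \in I. Proof. by have := tofP x; rewrite inE => /andP []. Qed.
Definition vert x : V := exist _ (tof x) (tofI x).
Lemma vertP x : val (vert x) \in pb x. Proof. by have := tofP x; rewrite inE => /andP []. Qed.
Lemma vert_eq x (v : V) : val v \in pb x -> vert x = v.
Proof.
move=> vx; apply: val_inj; apply: (uniqI (pb_in x)) => //; [exact: vertP | exact: tofI | exact: valP].
Qed.
Lemma vert_val (v : V) : vert (val v) = v. Proof. by apply: vert_eq; exact: mem_pb. Qed.

Lemma ex_chi (v : V) : exists y, (y \in pb (val v)) && (y != val v).
Proof.
have : (0 < #|pb (val v) :\ val v|)%N.
  have := card3 (pb_in (val v)); rewrite (cardsD1 (val v)) mem_pb /=; lia.
by case/card_gt0P => y; rewrite !inE => /andP [h1 h2]; exists y; rewrite h1 h2.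
Qed.
Definition chi v := xchoose (ex_chi v).
Lemma chiP v : (chi v \in pb (val v)) && (chi v != val v). Proof. exact: (xchooseP (ex_chi v)). Qed.

Lemma ex_psi (v : V) : exists y, [&& y \in pb (val v), y != val v & y != chi v].
Proof.
have /andP [c1 c2] := chiP v.
have : (0 < #|pb (val v) :\ val v :\ chi v|)%N.
  have h1 : chi v \in pb (val v) :\ val v by rewrite !inE c1 c2.
  have := card3 (pb_in (val v)); rewrite (cardsD1 (val v)) mem_pb (cardsD1 (chi v)) h1 /=; lia.
by case/card_gt0P => y; rewrite !inE => /and3P [h1 h2 h3]; exists y; rewrite h1 h2 h3.
Qed.
Definition psi v := xchoose (ex_psi v).
Lemma psiP v : [&& psi v \in pb (val v), psi v != val v & psi v != chi v].
Proof. exact: (xchooseP (ex_psi v)). Qed.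

Lemma pbE (v : V) : pb (val v) = val v |: (chi v |: [set psi v]).
Proof.
have /andP [c1 c2] := chiP v; have /and3P [p1 p2 p3] := psiP v.
apply/esym/eqP; rewrite eqEcard; apply/andP; split.
  by apply/subsetP => x; rewrite !inE => /orP [/eqP ->|/orP [] /eqP ->] //; exact: mem_pb.
rewrite card3 ?pb_in // cardsU1 cardsU1 cards1 !inE.
by rewrite negb_or eq_sym c2 eq_sym p2 /= eq_sym p3.
Qed.

Lemma csum (v : V) : col (val v) + col (chi v) + col (psi v) = 0.
Proof.
have := cycle_sum Hli (Hcyc (pb_in (val v))).
have /andP [c1 c2] := chiP v; have /and3P [p1 p2 p3] := psiP v.
rewrite pbE big_setU1 /=; last by rewrite !inE negb_or eq_sym c2 eq_sym p2.
by rewrite big_setU1 /= ?inE 1?eq_sym // big_set1 addrA.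
Qed.

Lemma col_psi (v : V) : col (psi v) = col (chi v) + col (val v).
Proof.
have := csum v; rewrite -addrA addrC => /eqP; rewrite addr_eq0 F2_opp addrC.
move/eqP => E; by rewrite -E addrCA F2_add2 addr0.
Qed.


Definition i0 := @Ordinal 3 0 isT.
Definition i1 := @Ordinal 3 1 isT.
Definition i2 := @Ordinal 3 2 isT.

Definition fmap x : V * 'I_3 :=
  (vert x, if x == val (vert x) then i0 else if x == chi (vert x) then i1 else i2).
Definition finv (p : V * 'I_3) : U :=
  if val p.2 == 0%N then val p.1 else if val p.2 == 1%N then chi p.1 else psi p.1.

Lemma pb_vert x : pb (val (vert x)) = pb x.
Proof. exact: pb_same (vertP x). Qed.

Lemma in_pbv (v : V) x : x \in pb (val v) -> [|| x == val v, x == chi v | x == psi v].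
Proof. by rewrite pbE !inE. Qed.

Lemma vert_chi (v : V) : vert (chi v) = v.
Proof.
have /andP [c1 _] := chiP v.
by apply: vert_eq; rewrite (pb_same c1) mem_pb.
Qed.

Lemma vert_psi (v : V) : vert (psi v) = v.
Proof.
have /and3P [p1 _ _] := psiP v.
by apply: vert_eq; rewrite (pb_same p1) mem_pb.
Qed.

Lemma tof_vert x : tof x = val (vert x). Proof. by []. Qed.
Lemma tof_val (v : V) : tof (val v) = val v. Proof. by rewrite tof_vert vert_val. Qed.
Lemma tof_chi (v : V) : tof (chi v) = val v. Proof. by rewrite tof_vert vert_chi. Qed.
Lemma tof_psi (v : V) : tof (psi v) = val v. Proof. by rewrite tof_vert vert_psi. Qed.

Lemma fK : cancel fmap finv.
Proof.
move=> x; rewrite /fmap /finv /=.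
case: (eqVneq x (tof x)) => [E|xv] /=; first by rewrite -E.
case: (eqVneq x (chi (vert x))) => [E|xc] /=; first by rewrite -E.
have := in_pbv (v := vert x) (x := x); rewrite pb_vert mem_pb => /(_ isT).
by rewrite (negPf xv) (negPf xc) /= => /eqP.
Qed.

Lemma finvK : cancel finv fmap.
Proof.
move=> [v [[|[|[|k]]] p]] //; rewrite /fmap /finv /=.
- by rewrite vert_val tof_val eqxx; congr pair; apply: val_inj.
- have /andP [_ c2] := chiP v.
  by rewrite vert_chi tof_chi (negPf c2) eqxx; congr pair; apply: val_inj.
- have /and3P [_ p2 p3] := psiP v.
  by rewrite vert_psi tof_psi (negPf p2) (negPf p3); congr pair; apply: val_inj.
Qed.

Definition e (u v : V) : bool := cf (chi v) u == 1.
Definition kap x : 'rV['F_2]_#|V| := \row_j cf x (enum_val j).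

Lemma kapE x : col x = \sum_u kap x 0 (enum_rank u) *: b u.
Proof. by rewrite cfP; apply: eq_bigr => u _; rewrite mxE enum_rankK. Qed.

Lemma Hkap J : indep M J <-> li kap J.
Proof. have := li_transfer hb kapE J; have := Hli J; tauto. Qed.

Lemma cf_psi (v : V) u : cf (psi v) u = cf (chi v) u + cf (val v) u.
Proof.
apply: (hbU (c := cf (psi v)) (d := fun u => cf (chi v) u + cf (val v) u)) => //.
rewrite -cfP col_psi (cfP (chi v)) (cfP (val v)) -big_split /=.
by apply: eq_bigr => u' _; rewrite scalerDl.
Qed.

Lemma ias_kap x : ias_col e (fmap x) = kap x.
Proof.
rewrite -{2}(fK x); case: (fmap x) => v [[|[|[|k]]] p] //; rewrite /finv /=.
- have -> : Ordinal p = i0 by apply: val_inj.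
  apply/rowP => j; rewrite ias_col0 mxE cf_val; congr (_%:R).
  by rewrite -(inj_eq enum_val_inj) enum_rankK.
- have -> : Ordinal p = i1 by apply: val_inj.
  by apply/rowP => j; rewrite ias_col1 mxE /e F2_eq1.
- have -> : Ordinal p = i2 by apply: val_inj.
  apply/rowP => j; rewrite ias_col2 [LHS]mxE ias_col1 ias_col0 mxE /e F2_eq1 cf_psi.
  rewrite cf_val; congr (_ + _%:R).
  by rewrite -(inj_eq enum_val_inj) enum_rankK.
Qed.

Lemma fmap_indep J : indep M J = ias_indep e (fmap @: J).
Proof.
apply/idP/idP => H.
- rewrite /ias_indep; apply/freeE_li; apply/(li_imset _ _ (can_inj fK)).
  by apply/(li_eq _ ias_kap); apply/Hkap.
- apply/Hkap; apply/(li_eq _ ias_kap); apply/(li_imset _ _ (can_inj fK)).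
  by apply/freeE_li.
Qed.

Lemma fmap_triple (v : V) : fmap @: pb (val v) = vertex_triple v.
Proof.
apply/setP => [[u i]]; rewrite inE /=; apply/imsetP/eqP => [[x xv E]|<-].
  case: E => -> _.
  by apply: vert_eq; rewrite (pb_same xv) mem_pb.
exists (finv (u, i)); last by rewrite finvK.
rewrite /finv /=; case: ifP => _; first exact: mem_pb.
case: ifP => _; [by case/andP: (chiP u) | by case/and3P: (psiP u)].
Qed.

Lemma fmap_Omega : [set fmap @: w | w : {set U} in Omega] = [set vertex_triple v | v : V].
Proof.
apply/setP => A; apply/imsetP/imsetP => [[w wO ->]|[v _ ->]].
  have [y] := meetI wO; rewrite inE => /andP [yw yI].
  exists (exist _ y yI) => //; rewrite -fmap_triple /=.
  by rewrite (pb_eq wO yw).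
by exists (pb (val v)); [exact: pb_in | rewrite fmap_triple].
Qed.


Lemma kap_r x (w : V) : kap x 0 (enum_rank w) = cf x w.
Proof. by rewrite mxE enum_rankK. Qed.

Lemma pbI_eq (w : V) y : y \in pb (val w) -> y \in I -> y = val w.
Proof. move=> yw yI; exact: (uniqI (pb_in (val w)) yw (mem_pb _) yI (valP w)). Qed.

Lemma blocks_neq (u v : V) y : u != v -> y \in pb (val u) -> y \in pb (val v) -> False.
Proof.
move=> uv yu yv.
have E : pb (val u) = pb (val v) by rewrite -(pb_same yu) (pb_same yv).
have := pbI_eq (w := u) (y := val v); rewrite E mem_pb (valP v) => /(_ isT isT) /val_inj vu.
by rewrite vu eqxx in uv.
Qed.

Lemma e_half (u v : V) : u != v -> e u v -> e v u.
Proof.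
move=> uv; rewrite /e => /eqP cvu; apply: NNPP => /negP Hn.
have cuv : cf (chi u) v = 0 by have [|c1] := F2cases (cf (chi u) v); [|rewrite c1 eqxx in Hn].
have vu : v != u by rewrite eq_sym.
have valu : val u != val v by apply: contra uv => /eqP /val_inj ->.
pose z := if cf (chi v) v == 0 then chi v else psi v.
have /andP [c1 c2] := chiP v; have /and3P [p1 p2 p3] := psiP v.
have /andP [c1u c2u] := chiP u.
have zB : z \in pb (val v) by rewrite /z; case: ifP.
have zu : cf z u = 1.
  rewrite /z; case: ifP => _ //; by rewrite cf_psi cvu cf_val (negPf uv) addr0.
have zv : cf z v = 0.
  rewrite /z; case: ifP => [/eqP //|/negbT H].
  have [c0|c0] := F2cases (cf (chi v) v); first by rewrite c0 eqxx in H.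
  by rewrite cf_psi c0 cf_val eqxx; apply: val_inj.
have zI : z \notin I.
  apply/negP => zI; have := pbI_eq zB zI; rewrite /z; case: ifP => _ E.
    by rewrite E eqxx in c2.
  by rewrite E eqxx in p2.
pose I0 := I :\ val u :\ val v.
have I0I : I0 \subset I by apply/subsetP => y; rewrite !inE => /and3P [].
have I0E : forall y, y \in I0 -> exists2 w : V, y = val w & (w != u) && (w != v).
  move=> y; rewrite !inE => /and3P [yv yu yI]; exists (exist _ y yI) => //.
  by rewrite -!(inj_eq val_inj) /= yu yv.
have zI0 : z \notin I0 by apply: contra zI; apply: (subsetP I0I).
pose J := z |: I0.
have indJ : indep M J.
  apply/Hkap; apply: (li_setT_row (j := enum_rank u)) => //.
  - by apply/Hkap; apply: indep_sub I0I indI.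
  - move=> y /I0E [w -> /andP [wu _]]; by rewrite kap_r cf_val eq_sym (negPf wu).
  - by rewrite kap_r zu oner_eq0.
have le1J : forall w, w \in Omega -> (#|w :&: J| <= 1)%N.
  move=> w wO; apply/card_le1_eqP => a1 a2; rewrite !inE.
  have H : forall y1 y2, y1 \in w -> y2 \in w -> y1 = z -> y2 \in I0 -> False.
    move=> y1 y2 y1w y2w y1z y2I0; rewrite y1z in y1w.
    have ew : w = pb (val v) by rewrite -(pb_eq wO y1w) (pb_same zB).
    have := pbI_eq (w := v) (y := y2); rewrite -ew y2w (subsetP I0I _ y2I0) => /(_ isT isT) E.
    by move: y2I0; rewrite E !inE eqxx.
  move=> /andP [a1w /orP [/eqP a1z|a1I]] /andP [a2w /orP [/eqP a2z|a2I]].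
  - by rewrite a1z a2z.
  - by exfalso; apply: (H a1 a2) => //; rewrite !inE.
  - by exfalso; apply: (H a2 a1) => //; rewrite !inE.
  - case/and3P: a1I => _ _ a1I; case/and3P: a2I => _ _ a2I.
    by apply: esym; apply: (uniqI wO a1w a2w).
have BJ : pb (val u) :&: J = set0.
  apply/setP => y; rewrite in_set0 !inE; apply/negP => /andP [yB /orP [/eqP yz|/and3P [_ yu yI]]].
    by apply: (blocks_neq uv yB); rewrite yz.
  by have := pbI_eq yB yI => E; rewrite E eqxx in yu.
have dep : forall a, a \in pb (val u) -> ~~ indep M (a |: J).
  move=> a aB; apply/negP => Ha.
  have acv : cf a v = 0.
    have := in_pbv aB; case/or3P => /eqP ->.
    - by rewrite cf_val (negPf vu).
    - by [].
    - by rewrite cf_psi cuv cf_val (negPf vu) addr0.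
  have aJ : a \notin J.
    rewrite !inE negb_or; apply/andP; split.
      by apply/negP => /eqP az; apply: (blocks_neq uv aB); rewrite az.
    apply/negP => /and3P [_ au aI].
    by have := pbI_eq aB aI => E; rewrite E eqxx in au.
  have vJ : val v \notin a |: J.
    rewrite !inE !negb_or eqxx /= andbT; apply/andP; split.
      by apply/negP => /eqP E; apply: (blocks_neq uv aB); rewrite -E mem_pb.
    by apply/negP => /eqP E; move: zI; rewrite -E (valP v).
  have : indep M (val v |: (a |: J)).
    apply/Hkap; apply: (li_setT_row (j := enum_rank v)) => //.
    - by apply/Hkap.
    - move=> y; rewrite in_setU1 => /orP [/eqP ->|]; first by rewrite kap_r.
      rewrite /J in_setU1 => /orP [/eqP ->|]; first by rewrite kap_r.
      by move=> /I0E [w -> /andP [_ wv]]; rewrite kap_r cf_val eq_sym (negPf wv).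
    - by rewrite kap_r cf_val eqxx oner_eq0.
  move/rkI; rewrite cardsU1 vJ cardsU1 aJ cardsU1 zI0.
  have cI : #|I| = (#|I0|).+2.
    rewrite (cardsD1 (val u) I) (valP u) (cardsD1 (val v) (I :\ val u)).
    have -> : val v \in I :\ val u by rewrite !inE eq_sym valu (valP v).
    by rewrite /= !add1n.
  by rewrite cI /= !add1n ltnn.
have ucu : val u != chi u by rewrite eq_sym.
have := shel indJ le1J (pb_in (val u)) BJ (mem_pb (val u)) c1u ucu.
by rewrite (negPf (dep _ (mem_pb _))) (negPf (dep _ c1u)).
Qed.

Lemma e_sym : symmetric e.
Proof.
move=> u v; case: (eqVneq u v) => [-> //|uv].
by apply/idP/idP; apply: e_half; rewrite // eq_sym.
Qed.

Lemma dir12 : exists (V : finType) (e : rel V) (f : U -> V * 'I_3),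
     [/\ symmetric e, bijective f,
         forall I : {set U}, indep M I = ias_indep e (f @: I) &
         [set f @: w | w : {set U} in Omega] = [set vertex_triple v | v : V]].
Proof.
exists V, e, fmap; split.
- exact: e_sym.
- by exists finv; [exact: fK | exact: finvK].
- exact: fmap_indep.
- exact: fmap_Omega.
Qed.

End Dir12.

End Aux.

Theorem theorem2p11 (U : finType) (M : matroid U) (Omega : {set {set U}}) :
  three_sheltering M Omega ->
  ([/\ binary M, (mrank M <= #|Omega|)%N &
       forall w, w \in Omega -> in_cycle_space M w]
   <->
   exists (V : finType) (e : rel V) (f : U -> V * 'I_3),
     [/\ symmetric e, bijective f,
         forall I : {set U}, indep M I = ias_indep e (f @: I) &
         [set f @: w | w : {set U} in Omega] = [set vertex_triple v | v : V]]).
Proof.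
move=> hS; split.
- case => [[n [col Hcol]] Hrk Hcyc].
  have [I [ptI maxI]] := Aux.exists_maxpt M Omega.
  exact: (Aux.dir12 hS Hcol Hrk Hcyc ptI maxI).
- case => V [e [f [_ fb Hind Hom]]]; split.
  + exact: Aux.d21_binary fb Hind.
  + exact: Aux.d21_rank fb Hind Hom.
  + by move=> w wO; apply: (Aux.d21_cycle fb Hind Hom wO).
Qed.
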